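(* Let $n\ge2$, $\alpha\in(1,2]$, $K\ge2$, and let $\mathcal{M}=\mathcal{M}(\alpha,K)$ be the collection of seeded intervals defined below. Then for every real $h$ with $0<h\le n/2$ and every integer $\eta$ with $\max(3h/2,1)\le\eta\le n-\max(3h/2,1)$, there exist integers $l\ge1$ and $v$ such that (i) $(v-l,v+l]\in\mathcal{M}$; (ii) $h/2\le l\le\max(h,1)$; (iii) $|v-\eta|\le l/K\le l/2$. In particular, $(v-l,v+l]\subseteq(\eta-\max(3h/2,1),\ \eta+\max(3h/2,1)]$.
   Context: Seeded intervals $\mathcal{M}(\alpha,K)$ for sample size $n$: let $l_1=1$, $l_{j+1}=\max\{l_j+1,\lfloor\alpha l_j\rfloor\}$ for $j\ge1$, $H=\max\{j:l_j\le n/2\}$, $s_l=\max\{1,\lfloor l/K\rfloor\}$, $\mathcal{I}_l=\{(n-2l,n]\}\cup\{(is_l,\,is_l+2l]: i=0,1,\dots,\lfloor(n-2l)/s_l\rfloor\}$, and $\mathcal{M}(\alpha,K)=\bigcup_{j=1}^{H}\mathcal{I}_{l_j}$, where $(a,b]$ denotes the integer interval $\{a+1,\dots,b\}$. *)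

(* Defs.v *)
From Stdlib Require Import Reals ZArith Lra Lia.
Open Scope R_scope.

Definition Zfloor (r : R) : Z := Int_part r.

(* lseq alpha j = l_{j+1}  (0-indexed):  l_1 = 1,
   l_{j+1} = max (l_j + 1) (floor (alpha * l_j)) *)
Fixpoint lseq (alpha : R) (j : nat) : Z :=
  match j with
  | O => 1%Z
  | S k => Z.max (lseq alpha k + 1)%Z (Zfloor (alpha * IZR (lseq alpha k)))
  end.

Definition sstep (K : R) (l : Z) : Z := Z.max 1 (Zfloor (IZR l / K)).

(* An integer interval (a, b] = {a+1, ..., b} is represented by the pair (a, b).
   I_l = {(n-2l, n]} U {(i s_l, i s_l + 2l] : i = 0, ..., floor((n-2l)/s_l)} *)
Definition in_Il (n : Z) (K : R) (l : Z) (a b : Z) : Prop :=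
  (a = n - 2 * l /\ b = n)%Z \/
  exists i : Z, (0 <= i <= (n - 2 * l) / sstep K l)%Z /\
                a = (i * sstep K l)%Z /\ b = (i * sstep K l + 2 * l)%Z.

(* M(alpha, K) = union over j = 1..H of I_{l_j}, H = max {j : l_j <= n/2}.
   With 0-indexing, j0 (= j-1) ranges over indices with j0 <= H-1, i.e.
   there is some j' >= j0 with l_{j'+1} <= n/2 (this is exactly j0+1 <= H). *)
Definition in_M (n : Z) (alpha K : R) (a b : Z) : Prop :=
  exists j : nat,
    (exists j' : nat, (j <= j')%nat /\ IZR (lseq alpha j') <= IZR n / 2) /\
    in_Il n K (lseq alpha j) a b.

(* Main.v *)
Require Import Defs.
From Stdlib Require Import Reals ZArith Lra Lia.
Open Scope R_scope.

Lemma Zfloor_le r : IZR (Defs.Zfloor r) <= r.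
Proof. unfold Defs.Zfloor. destruct (base_Int_part r) as [H _]. exact H. Qed.

Lemma lseq_ge1 alpha k : (1 <= lseq alpha k)%Z.
Proof. induction k; simpl; lia. Qed.

Lemma lseq_step alpha k : 1 < alpha <= 2 ->
  (lseq alpha k + 1 <= lseq alpha (S k) <= 2 * lseq alpha k)%Z.
Proof.
  intros Ha. pose proof (lseq_ge1 alpha k) as H1. cbn [lseq].
  assert (Hf : (Defs.Zfloor (alpha * IZR (lseq alpha k)) <= 2 * lseq alpha k)%Z).
  { apply le_IZR. rewrite mult_IZR.
    pose proof (Zfloor_le (alpha * IZR (lseq alpha k))).
    apply IZR_le in H1.
    assert (alpha * IZR (lseq alpha k) <= 2 * IZR (lseq alpha k)).
    { apply Rmult_le_compat_r; lra. }
    lra. }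
  lia.
Qed.

Lemma lseq_lin alpha k : 1 < alpha <= 2 -> (Z.of_nat k + 1 <= lseq alpha k)%Z.
Proof.
  intros Ha. induction k; simpl; [lia|].
  pose proof (lseq_step alpha k Ha). simpl in H. lia.
Qed.

Lemma search alpha h : 1 < alpha <= 2 -> IZR (lseq alpha 0) <= h ->
  forall N, h < IZR (lseq alpha N) ->
  exists j, IZR (lseq alpha j) <= h < IZR (lseq alpha (S j)).
Proof.
  intros Ha H0 N. induction N; intros HN.
  - lra.
  - destruct (Rle_dec (IZR (lseq alpha N)) h).
    + exists N. lra.
    + apply IHN. lra.
Qed.

Lemma exists_l n alpha h : (2 <= n)%Z -> 1 < alpha <= 2 -> 0 < h <= IZR n / 2 ->
  exists j, h / 2 <= IZR (lseq alpha j) <= Rmax h 1 /\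
    3 * IZR (lseq alpha j) / 2 - 1 < Rmax (3 * h / 2) 1 /\
    IZR (lseq alpha j) <= IZR n / 2.
Proof.
  intros Hn Ha Hh. apply IZR_le in Hn.
  destruct (Rle_dec h 1).
  - exists 0%nat. simpl. unfold Rmax.
    destruct (Rle_dec h 1); destruct (Rle_dec (3*h/2) 1); lra.
  - assert (H0 : IZR (lseq alpha 0) <= h) by (simpl; lra).
    destruct (archimed h) as [Hu _].
    set (N := Z.to_nat (up h)).
    assert (HN : h < IZR (lseq alpha N)).
    { pose proof (lseq_lin alpha N Ha). apply IZR_le in H.
      rewrite plus_IZR in H. unfold N in H.
      assert (0 <= up h)%Z.
      { apply le_IZR. lra. }
      rewrite Z2Nat.id in H by exact H1. unfold N. lra. }
    destruct (search alpha h Ha H0 N HN) as [j [Hj1 Hj2]].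
    pose proof (lseq_step alpha j Ha) as [_ Hs].
    apply IZR_le in Hs. rewrite mult_IZR in Hs.
    exists j. unfold Rmax.
    destruct (Rle_dec h 1); destruct (Rle_dec (3*h/2) 1); lra.
Qed.

Theorem lemma7 (n : Z) (alpha K : R) :
  (2 <= n)%Z -> 1 < alpha <= 2 -> 2 <= K ->
  forall (h : R) (eta : Z),
    0 < h <= IZR n / 2 ->
    Rmax (3 * h / 2) 1 <= IZR eta <= IZR n - Rmax (3 * h / 2) 1 ->
    exists (l v : Z),
      (1 <= l)%Z /\
      in_M n alpha K (v - l) (v + l) /\
      h / 2 <= IZR l <= Rmax h 1 /\
      Rabs (IZR (v - eta)) <= IZR l / K <= IZR l / 2 /\
      (forall x : Z, (v - l < x <= v + l)%Z ->
         IZR eta - Rmax (3 * h / 2) 1 < IZR x <= IZR eta + Rmax (3 * h / 2) 1).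
Proof.
  intros Hn Ha HK h eta Hh Heta.
  destruct (exists_l n alpha h Hn Ha Hh) as [j [Hl1 [Hl2 Hl3]]].
  set (l := lseq alpha j) in *.
  pose proof (lseq_ge1 alpha j) as Hl0. fold l in Hl0.
  assert (HM : Rmax h 1 <= Rmax (3 * h / 2) 1).
  { unfold Rmax. destruct (Rle_dec h 1); destruct (Rle_dec (3*h/2) 1); lra. }
  assert (Hle : (l <= eta)%Z) by (apply le_IZR; lra).
  assert (Hge : (eta <= n - l)%Z) by (apply le_IZR; rewrite minus_IZR; lra).
  assert (Hl0R : 1 <= IZR l) by (apply IZR_le in Hl0; exact Hl0).
  assert (HlK : 0 <= IZR l / K).
  { unfold Rdiv. apply Rmult_le_pos; [lra|]. left. apply Rinv_0_lt_compat. lra. }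
  assert (HK2 : IZR l / K <= IZR l / 2).
  { unfold Rdiv. apply Rmult_le_compat_l; [lra|]. apply Rinv_le_contravar; lra. }
  set (s := sstep K l).
  assert (Hs : (1 <= s)%Z /\ IZR (s - 1) <= IZR l / K).
  { unfold s, sstep. pose proof (Zfloor_le (IZR l / K)).
    destruct (Z.max_spec_le 1 (Defs.Zfloor (IZR l / K))) as [[Ha1 Ha2]|[Ha1 Ha2]];
      rewrite Ha2; split; try lia.
    - rewrite minus_IZR. lra.
    - simpl. lra. }
  destruct Hs as [Hs1 Hs2].
  set (i := ((eta - l) / s)%Z).
  set (r := ((eta - l) mod s)%Z).
  assert (Hdm : (eta - l = s * i + r)%Z) by (apply Z.div_mod; lia).
  assert (Hr : (0 <= r < s)%Z) by (apply Z.mod_pos_bound; lia).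
  assert (Hi0 : (0 <= i)%Z) by (apply Z.div_pos; lia).
  assert (Hi1 : (i <= (n - 2 * l) / s)%Z) by (apply Z.div_le_mono; lia).
  assert (HrR : IZR r <= IZR l / K).
  { assert (IZR r <= IZR (s - 1)) by (apply IZR_le; lia). lra. }
  exists l, (l + i * s)%Z.
  split; [exact Hl0|].
  split.
  { exists j. split. { exists j. split; [lia|exact Hl3]. }
    right. exists i. change (lseq alpha j) with l. fold s. split; [lia|]. split; lia. }
  split; [exact Hl1|].
  split.
  { assert (E : (l + i * s - eta = - r)%Z) by lia. rewrite E, opp_IZR, Rabs_Ropp.
    rewrite Rabs_right; [split; lra|]. apply Rle_ge. apply IZR_le. lia. }
  intros x Hx. split.
  - assert (IZR (eta - x) <= IZR (r + l - 1)) by (apply IZR_le; lia).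
    rewrite !minus_IZR, !plus_IZR in H. lra.
  - assert (IZR (x - eta) <= IZR l) by (apply IZR_le; lia).
    rewrite minus_IZR in H. lra.
Qed.
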